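(* For $0\le v\le 1$ and $a,b>0$, $$G(a,b)\le L\left(G_v(a,b),G_{1-v}(a,b)\right)\le L(a,b)$$ and $$G(a,b)\le G\left(L_v(a,b),L_{1-v}(a,b)\right)\le L(a,b).$$
   Context: For $x,y>0$: $G(x,y):=\sqrt{xy}$, $G_v(x,y):=x^{1-v}y^v$, and the logarithmic mean $L(x,y):=\frac{x-y}{\log x-\log y}$ for $x\neq y$, $L(x,x):=x$. For $0<v<1$ and $a\ne b$ the weighted logarithmic mean is $$L_v(a,b):=\frac{1}{\log a-\log b}\left(\frac{1-v}{v}(a-a^{1-v}b^v)+\frac{v}{1-v}(a^{1-v}b^v-b)\right),$$ with $L_v(a,a):=a$, and for the endpoint values (by continuity in $v$) $L_0(a,b):=a$, $L_1(a,b):=b$. *)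

(* Defs.v *)
From Stdlib Require Import Reals.
Open Scope R_scope.

Definition Gm (x y : R) : R := sqrt (x * y).

Definition Gv (v x y : R) : R := Rpower x (1 - v) * Rpower y v.

Definition Lm (x y : R) : R :=
  if Req_EM_T x y then x else (x - y) / (ln x - ln y).

Definition Lv (v a b : R) : R :=
  if Req_EM_T a b then a
  else if Req_EM_T v 0 then a
  else if Req_EM_T v 1 then b
  else / (ln a - ln b) *
       ((1 - v) / v * (a - Gv v a b) + v / (1 - v) * (Gv v a b - b)).

(* Main.v *)
Require Import Defs.
From Stdlib Require Import Reals Lra Psatz.
From Coquelicot Require Import Coquelicot.
Open Scope R_scope.

Definition sh (x : R) := exp x - exp (- x).

Lemma mono0 (f f' : R -> R) (x : R) : 0 <= x ->
  (forall c, derivable_pt_lim f c (f' c)) ->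
  (forall c, 0 <= c <= x -> 0 <= f' c) -> f 0 <= f x.
Proof.
  intros Hx Hd Hp. destruct (Req_dec x 0) as [->|Hn]; [lra|].
  destruct (MVT_cor2 f f' 0 x) as [c [Hc1 Hc2]]; [lra| intros; apply Hd |].
  assert (0 <= f' c) by (apply Hp; lra). nra.
Qed.

Lemma ch_mono y x : 0 <= y <= x -> exp y + exp (-y) <= exp x + exp (-x).
Proof.
  intros H.
  assert (E1 : exp (-y) = exp x * exp (-x-y)) by (rewrite <- exp_plus; f_equal; ring).
  assert (E2 : exp (-x) = exp y * exp (-x-y)) by (rewrite <- exp_plus; f_equal; ring).
  assert (exp y <= exp x) by (destruct (Req_dec x y); [subst; lra| left; apply exp_increasing; lra]).
  assert (exp (-x-y) <= 1) by (rewrite <- exp_0; destruct (Req_dec (-x-y) 0) as [e|];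
    [rewrite e; lra| left; apply exp_increasing; lra]).
  assert (0 < exp (-x-y)) by apply exp_pos.
  rewrite E1, E2. nra.
Qed.

Lemma sh0 : sh 0 = 0.
Proof. unfold sh. rewrite Ropp_0. ring. Qed.

Lemma L1 x : 0 <= x -> 2 * x <= sh x.
Proof.
  intros Hx.
  pose (f := fun c => sh c - 2 * c).
  assert (f 0 <= f x).
  { apply (mono0 f (fun c => exp c + exp (-c) - 2)); auto.
    - intros c. apply is_derive_Reals. unfold f, sh. auto_derive; auto. ring.
    - intros c Hc. pose proof (ch_mono 0 c ltac:(lra)). rewrite Ropp_0, exp_0 in H. lra. }
  unfold f in H. rewrite sh0 in H. lra.
Qed.

Lemma L2 l x : 0 <= l <= 1 -> 0 <= x -> sh (l * x) <= l * sh x.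
Proof.
  intros Hl Hx.
  pose (f := fun c => l * sh c - sh (l * c)).
  assert (f 0 <= f x).
  { apply (mono0 f (fun c => l * (exp c + exp (-c)) - l * (exp (l*c) + exp (-(l*c))))); auto.
    - intros c. apply is_derive_Reals. unfold f, sh. auto_derive; auto. ring.
    - intros c Hc. pose proof (ch_mono (l*c) c ltac:(nra)). nra. }
  unfold f in H. rewrite Rmult_0_r, sh0 in H. lra.
Qed.

Lemma K s t : 0 < s <= t -> t * sh s <= s * sh t.
Proof.
  intros H.
  assert (0 <= s / t) by (apply Rdiv_le_0_compat; lra).
  assert (s / t <= 1) by (apply Rmult_le_reg_r with t; [lra|]; unfold Rdiv; rewrite Rmult_assoc, Rinv_l; lra).
  pose proof (L2 (s/t) t ltac:(lra) ltac:(lra)) as H2.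
  replace (s / t * t) with s in H2 by (field; lra).
  assert (t * sh s <= t * (s / t * sh t)) as H5 by (apply Rmult_le_compat_l; lra).
  replace (t * (s / t * sh t)) with (s * sh t) in H5 by (field; lra). lra.
Qed.

Definition S (t : R) := sh t / (2 * t).
Definition S' (t : R) := if Req_EM_T t 0 then 1 else S t.

Lemma sh_opp t : sh (- t) = - sh t.
Proof. unfold sh. rewrite Ropp_involutive. ring. Qed.

Lemma S_opp t : S (- t) = S t.
Proof.
  unfold S. rewrite sh_opp. destruct (Req_dec t 0) as [->|H].
  - rewrite Ropp_0, sh0, Rmult_0_r. unfold Rdiv. rewrite Rinv_0. ring.
  - field. lra.
Qed.

Lemma S_abs t : S t = S (Rabs t).
Proof. unfold Rabs. destruct (Rcase_abs t); [rewrite S_opp|]; reflexivity. Qed.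

Lemma S_pos_ge1 t : 0 < t -> 1 <= S t.
Proof.
  intros H. pose proof (L1 t ltac:(lra)). unfold S.
  apply Rmult_le_reg_r with (2 * t); [lra|].
  unfold Rdiv. rewrite Rmult_assoc, Rinv_l; lra.
Qed.

Lemma S_pos_mono s t : 0 < s <= t -> S s <= S t.
Proof.
  intros H. pose proof (K s t H).
  assert (S t - S s = (s * sh t - t * sh s) / (2 * s * t)) by (unfold S; field; lra).
  assert (0 <= (s * sh t - t * sh s) / (2 * s * t)).
  { apply Rdiv_le_0_compat; [lra|]. assert (0 < s * t) by nra. lra. }
  lra.
Qed.

Lemma S_ge1 t : t <> 0 -> 1 <= S t.
Proof. intros H. rewrite S_abs. apply S_pos_ge1. apply Rabs_pos_lt; auto. Qed.

Lemma S_mono s t : 0 < Rabs s <= Rabs t -> S s <= S t.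
Proof. intros H. rewrite (S_abs s), (S_abs t). apply S_pos_mono; auto. Qed.

Lemma S'_ge1 t : 1 <= S' t.
Proof. unfold S'. destruct (Req_EM_T t 0); [lra|]. apply S_ge1; auto. Qed.

Lemma S'_mono s t : Rabs s <= Rabs t -> S' s <= S' t.
Proof.
  intros H. unfold S' at 1. destruct (Req_EM_T s 0); [apply S'_ge1|].
  assert (0 < Rabs s) by (apply Rabs_pos_lt; auto).
  unfold S'. destruct (Req_EM_T t 0) as [e|].
  - rewrite e, Rabs_R0 in H. lra.
  - apply S_mono; lra.
Qed.

Lemma Lm_exp m t : Lm (exp (m + t)) (exp (m - t)) = exp m * S' t.
Proof.
  unfold Lm, S'.
  destruct (Req_EM_T (exp (m + t)) (exp (m - t))) as [E|E];
  destruct (Req_EM_T t 0) as [e|e].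
  - subst. rewrite Rplus_0_r. ring.
  - apply exp_inv in E. lra.
  - exfalso. apply E. subst. f_equal. ring.
  - rewrite !ln_exp. unfold S, sh. unfold Rminus. rewrite !exp_plus. field. lra.
Qed.

Lemma Gm_exp m t : Gm (exp (m + t)) (exp (m - t)) = exp m.
Proof.
  unfold Gm. replace (exp (m + t) * exp (m - t)) with (exp m * exp m)
    by (rewrite <- !exp_plus; f_equal; ring).
  apply sqrt_square. left. apply exp_pos.
Qed.

Lemma Gv_exp v m d : Gv v (exp (m + d)) (exp (m - d)) = exp (m + (1 - 2 * v) * d).
Proof. unfold Gv, Rpower. rewrite !ln_exp, <- exp_plus. f_equal. ring. Qed.

Lemma Gv_exp' v m d : Gv (1 - v) (exp (m + d)) (exp (m - d)) = exp (m - (1 - 2 * v) * d).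
Proof. unfold Gv, Rpower. rewrite !ln_exp, <- exp_plus. f_equal. ring. Qed.

Lemma part1 v m d : 0 <= v <= 1 ->
  Gm (exp (m + d)) (exp (m - d)) <=
  Lm (Gv v (exp (m + d)) (exp (m - d))) (Gv (1 - v) (exp (m + d)) (exp (m - d)))
  <= Lm (exp (m + d)) (exp (m - d)).
Proof.
  intros Hv. rewrite Gv_exp, Gv_exp', !Lm_exp, Gm_exp.
  pose proof (exp_pos m).
  assert (Rabs ((1 - 2 * v) * d) <= Rabs d).
  { rewrite Rabs_mult. assert (Rabs (1 - 2 * v) <= 1) by (apply Rabs_le; lra).
    pose proof (Rabs_pos d). nra. }
  pose proof (S'_mono _ _ H0). pose proof (S'_ge1 ((1 - 2 * v) * d)).
  split; nra.
Qed.

Lemma aux1 v A B kk : 0 < v < 1 -> 1 <= A -> 1 <= B -> 2 <= kk ->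
  1 <= (1 - v) ^ 2 * A ^ 2 + v ^ 2 * B ^ 2 + v * (1 - v) * A * B * kk.
Proof.
  intros Hv HA HB Hk.
  assert (h1 : 1 <= A ^ 2) by (simpl; nra).
  assert (h2 : 1 <= B ^ 2) by (simpl; nra).
  assert (h3 : 1 <= A * B) by nra.
  assert (h4 : 2 <= A * B * kk) by nra.
  assert (w : 0 <= v * (1 - v)) by nra.
  assert (h5 : (1 - v) ^ 2 * 1 <= (1 - v) ^ 2 * A ^ 2) by (apply Rmult_le_compat_l; [apply pow2_ge_0|lra]).
  assert (h6 : v ^ 2 * 1 <= v ^ 2 * B ^ 2) by (apply Rmult_le_compat_l; [apply pow2_ge_0|lra]).
  assert (h7 : v * (1 - v) * 2 <= v * (1 - v) * (A * B * kk)) by (apply Rmult_le_compat_l; lra).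
  replace (v * (1 - v) * A * B * kk) with (v * (1 - v) * (A * B * kk)) by ring.
  assert (e : (1 - v) ^ 2 * 1 + v ^ 2 * 1 + v * (1 - v) * 2 = 1) by ring.
  lra.
Qed.

Lemma core v d em e1 e2 A B Sd : 0 < v < 1 -> d <> 0 -> 0 < em -> 0 < e1 -> 0 < e2 ->
  A = (e1 - / e1) / (2 * (d * v)) -> B = (e2 - / e2) / (2 * (d * (1 - v))) ->
  Sd = (e1 * e2 - / e1 * / e2) / (2 * d) ->
  1 <= A -> 1 <= B -> 1 <= Sd -> (1 - 2 * v) * (A * A - B * B) <= 0 ->
  em <= sqrt ((em * ((1 - v) * e2 * A + v * / e1 * B)) * (em * (v * e1 * B + (1 - v) * / e2 * A)))
  <= em * Sd.
Proof.
  intros Hv Hd Hem H1 H2 eA eB eS HA HB HS Hsg.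
  set (k := e1 * e2).
  assert (Hk : 0 < k) by (unfold k; nra).
  set (Rr := (1 - v) ^ 2 * A ^ 2 + v ^ 2 * B ^ 2 + v * (1 - v) * A * B * (k + / k)).
  assert (EP : (em * ((1 - v) * e2 * A + v * / e1 * B)) * (em * (v * e1 * B + (1 - v) * / e2 * A))
     = em ^ 2 * Rr) by (unfold Rr, k; field; lra).
  assert (ES : Sd ^ 2 - Rr = (2 * v - 1) * (A * A - B * B)).
  { assert (d * v <> 0) by (apply Rmult_integral_contrapositive; split; lra).
    assert (d * (1 - v) <> 0) by (apply Rmult_integral_contrapositive; split; lra).
    unfold Rr, k. rewrite eA, eB, eS. field. repeat split; try lra. }
  assert (Hkk : 2 <= k + / k).
  { assert (k + / k - 2 = (k - 1) ^ 2 / k) by (field; lra).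
    assert (0 <= (k - 1) ^ 2 / k) by (apply Rmult_le_pos; [apply pow2_ge_0 | left; apply Rinv_0_lt_compat; exact Hk]). lra. }
  assert (HR1 : 1 <= Rr) by (unfold Rr; apply aux1; lra).
  assert (HR2 : Rr <= Sd ^ 2) by nra.
  rewrite EP. split.
  - rewrite <- (sqrt_square em) at 1 by lra. apply sqrt_le_1_alt. nra.
  - rewrite <- (sqrt_square (em * Sd)) by nra. apply sqrt_le_1_alt.
    replace ((em * Sd) * (em * Sd)) with (em ^ 2 * Sd ^ 2) by ring.
    apply Rmult_le_compat_l; nra.
Qed.

Lemma Gm_same x : 0 < x -> Gm x x = x.
Proof. intros. unfold Gm. apply sqrt_square. lra. Qed.

Lemma Lm_same x : Lm x x = x.
Proof. unfold Lm. destruct (Req_EM_T x x); [reflexivity| congruence]. Qed.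

Lemma Gm_comm x y : Gm x y = Gm y x.
Proof. unfold Gm. rewrite Rmult_comm. reflexivity. Qed.

Lemma part2 v m d : 0 < v < 1 -> d <> 0 ->
  Gm (exp (m + d)) (exp (m - d)) <=
  Gm (/ (ln (exp (m + d)) - ln (exp (m - d))) *
       ((1 - v) / v * (exp (m + d) - Gv v (exp (m + d)) (exp (m - d))) +
        v / (1 - v) * (Gv v (exp (m + d)) (exp (m - d)) - exp (m - d))))
     (/ (ln (exp (m + d)) - ln (exp (m - d))) *
       ((1 - (1 - v)) / (1 - v) * (exp (m + d) - Gv (1 - v) (exp (m + d)) (exp (m - d))) +
        (1 - v) / (1 - (1 - v)) * (Gv (1 - v) (exp (m + d)) (exp (m - d)) - exp (m - d))))
  <= Lm (exp (m + d)) (exp (m - d)).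
Proof.
  intros Hv Hd.
  rewrite Lm_exp, Gm_exp, Gv_exp, Gv_exp', !ln_exp.
  unfold S'. destruct (Req_EM_T d 0) as [e|_]; [contradiction|].
  set (em := exp m). set (e1 := exp (d * v)). set (e2 := exp (d * (1 - v))).
  assert (Hem : 0 < em) by apply exp_pos.
  assert (H1 : 0 < e1) by apply exp_pos.
  assert (H2 : 0 < e2) by apply exp_pos.
  assert (Ea : exp (m + d) = em * e1 * e2).
  { unfold em, e1, e2. rewrite <- !exp_plus. f_equal. ring. }
  assert (Eb : exp (m - d) = em * / e1 * / e2).
  { unfold em, e1, e2. rewrite <- !exp_Ropp, <- !exp_plus. f_equal. ring. }
  assert (Eg : exp (m + (1 - 2 * v) * d) = em * e2 * / e1).
  { unfold em, e1, e2. rewrite <- !exp_Ropp, <- !exp_plus. f_equal. ring. }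
  assert (Eh : exp (m - (1 - 2 * v) * d) = em * e1 * / e2).
  { unfold em, e1, e2. rewrite <- !exp_Ropp, <- !exp_plus. f_equal. ring. }
  assert (eA : S (d * v) = (e1 - / e1) / (2 * (d * v))).
  { unfold S, sh, e1. rewrite exp_Ropp. reflexivity. }
  assert (eB : S (d * (1 - v)) = (e2 - / e2) / (2 * (d * (1 - v)))).
  { unfold S, sh, e2. rewrite exp_Ropp. reflexivity. }
  assert (eS : S d = (e1 * e2 - / e1 * / e2) / (2 * d)).
  { unfold S, sh, e1, e2. rewrite <- !exp_Ropp, <- !exp_plus.
    replace (d * v + d * (1 - v)) with d by ring.
    replace (- (d * v) + - (d * (1 - v))) with (- d) by ring. reflexivity. }
  assert (dv : d * v <> 0) by (apply Rmult_integral_contrapositive; split; lra).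
  assert (dw : d * (1 - v) <> 0) by (apply Rmult_integral_contrapositive; split; lra).
  assert (EP : / (m + d - (m - d)) *
       ((1 - v) / v * (exp (m + d) - exp (m + (1 - 2 * v) * d)) +
        v / (1 - v) * (exp (m + (1 - 2 * v) * d) - exp (m - d)))
     = em * ((1 - v) * e2 * S (d * v) + v * / e1 * S (d * (1 - v)))).
  { rewrite Ea, Eb, Eg, eA, eB. field. repeat split; lra. }
  assert (EQ : / (m + d - (m - d)) *
       ((1 - (1 - v)) / (1 - v) * (exp (m + d) - exp (m - (1 - 2 * v) * d)) +
        (1 - v) / (1 - (1 - v)) * (exp (m - (1 - 2 * v) * d) - exp (m - d)))
     = em * (v * e1 * S (d * (1 - v)) + (1 - v) * / e2 * S (d * v))).
  { rewrite Ea, Eb, Eh, eA, eB. field. repeat split; lra. }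
  rewrite EP, EQ. unfold Gm at 1.
  apply (core v d em e1 e2 _ _ _ Hv Hd Hem H1 H2 eA eB eS).
  - apply S_ge1; auto.
  - apply S_ge1; auto.
  - apply S_ge1; auto.
  - destruct (Rle_dec v (1/2)).
    + assert (S (d * v) <= S (d * (1 - v))).
      { apply S_mono. rewrite !Rabs_mult, (Rabs_right v), (Rabs_right (1 - v)) by lra.
        pose proof (Rabs_pos_lt d Hd). split.
        - apply Rmult_lt_0_compat; lra.
        - apply Rmult_le_compat_l; lra. }
      pose proof (S_ge1 (d * v) dv).
      assert (S (d * v) * S (d * v) <= S (d * (1 - v)) * S (d * (1 - v))) by (apply Rmult_le_compat; lra).
      assert (0 <= 1 - 2 * v) by lra.
      assert (0 <= (1 - 2 * v) * (S (d * (1 - v)) * S (d * (1 - v)) - S (d * v) * S (d * v))) by (apply Rmult_le_pos; lra).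
      lra.
    + assert (S (d * (1 - v)) <= S (d * v)).
      { apply S_mono. rewrite !Rabs_mult, (Rabs_right v), (Rabs_right (1 - v)) by lra.
        pose proof (Rabs_pos_lt d Hd). split.
        - apply Rmult_lt_0_compat; lra.
        - apply Rmult_le_compat_l; lra. }
      pose proof (S_ge1 (d * (1 - v)) dw).
      assert (S (d * (1 - v)) * S (d * (1 - v)) <= S (d * v) * S (d * v)) by (apply Rmult_le_compat; lra).
      assert (0 <= 2 * v - 1) by lra.
      assert (0 <= (2 * v - 1) * (S (d * v) * S (d * v) - S (d * (1 - v)) * S (d * (1 - v)))) by (apply Rmult_le_pos; lra).
      lra.
Qed.

Theorem theorem2p11 (v a b : R) :
  0 <= v <= 1 -> 0 < a -> 0 < b ->
  (Gm a b <= Lm (Gv v a b) (Gv (1 - v) a b) <= Lm a b) /\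
  (Gm a b <= Gm (Lv v a b) (Lv (1 - v) a b) <= Lm a b).
Proof.
  intros Hv Ha Hb.
  pose (m := (ln a + ln b) / 2). pose (d := (ln a - ln b) / 2).
  assert (Ea : a = exp (m + d)).
  { unfold m, d. replace ((ln a + ln b) / 2 + (ln a - ln b) / 2) with (ln a) by field.
    rewrite exp_ln; auto. }
  assert (Eb : b = exp (m - d)).
  { unfold m, d. replace ((ln a + ln b) / 2 - (ln a - ln b) / 2) with (ln b) by field.
    rewrite exp_ln; auto. }
  clearbody m d. subst a b.
  pose proof (part1 v m d Hv) as P1.
  split; [exact P1|].
  assert (GL : Gm (exp (m + d)) (exp (m - d)) <= Lm (exp (m + d)) (exp (m - d))) by lra.
  unfold Lv.
  destruct (Req_EM_T (exp (m + d)) (exp (m - d))) as [E|E].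
  { rewrite <- E, Gm_same, Lm_same by apply exp_pos. lra. }
  assert (Hd : d <> 0) by (intro; subst; apply E; f_equal; ring).
  destruct (Req_EM_T v 0) as [v0|v0].
  { subst v. replace (1 - 0) with 1 by ring.
    destruct (Req_EM_T 1 0); [lra|]. destruct (Req_EM_T 1 1); [|lra]. lra. }
  destruct (Req_EM_T v 1) as [v1|v1].
  { subst v. replace (1 - 1) with 0 by ring.
    destruct (Req_EM_T 0 0); [|lra]. rewrite (Gm_comm (exp (m - d))). lra. }
  destruct (Req_EM_T (1 - v) 0); [lra|].
  destruct (Req_EM_T (1 - v) 1); [lra|].
  apply part2; auto. lra.
Qed.
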